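(* For $n\ge1$, $$\left|\Pi_n\wr C_2(1^11^1,1^12^2,1^22^1)\right|=\begin{cases}4&\text{if } n=2,\\ 2&\text{otherwise}.\end{cases}$$
   Context: For $n\ge0$ let $[n]=\{1,\dots,n\}$. A $2$-colored set partition of $[n]$ is a set partition of $[n]$ together with an assignment of a color from $\{1,2\}$ to each element; $\Pi_n\wr C_2$ is the set of these. For a set $S$ of patterns, $\Pi_n\wr C_2(S)$ is the set of such colored partitions avoiding every pattern in $S$ in the pattern sense. For the patterns used here: $\sigma$ contains $1^11^1$ iff two elements in the same block have the same color; $1^12^2$ iff there are $i<j$ in different blocks with $i$ colored $1$ and $j$ colored $2$; $1^22^1$ iff there are $i<j$ in different blocks with $i$ colored $2$ and $j$ colored $1$. *)

(* Defs.v *)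
From mathcomp Require Import all_boot.
Set Implicit Arguments. Unset Strict Implicit. Unset Printing Implicit Defensive.

(* [n] = {1,...,n} is modelled by 'I_n = {0,...,n-1} (order-preserving shift).
   Colors {1,2} are modelled by 'I_2: ord 0 = color 1, ord 1 = color 2.
   A 2-colored set partition of [n] is a pair (P, c) where P : {set {set 'I_n}}
   is a set partition of [n] (MathComp's [partition P [set: 'I_n]]: blocks are
   nonempty, pairwise disjoint, covering) and c : {ffun 'I_n -> 'I_2}. *)

Definition colored_partition (n : nat) : Type :=
  ({set {set 'I_n}} * {ffun 'I_n -> 'I_2})%type.

Definition is_colored_partition n (s : colored_partition n) : bool :=
  partition s.1 [set: 'I_n].

Definition same_block n (s : colored_partition n) (i j : 'I_n) : bool :=
  pblock s.1 i == pblock s.1 j.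

Definition color_is n (s : colored_partition n) (i : 'I_n) (k : nat) : bool :=
  (nat_of_ord (s.2 i)).+1 == k.

Definition contains_1111 n (s : colored_partition n) : bool :=
  [exists i : 'I_n, exists j : 'I_n,
     (i < j) && same_block s i j && (s.2 i == s.2 j)].

Definition contains_1122 n (s : colored_partition n) : bool :=
  [exists i : 'I_n, exists j : 'I_n,
     [&& i < j, ~~ same_block s i j, color_is s i 1 & color_is s j 2]].

Definition contains_1221 n (s : colored_partition n) : bool :=
  [exists i : 'I_n, exists j : 'I_n,
     [&& i < j, ~~ same_block s i j, color_is s i 2 & color_is s j 1]].

Definition avoiders n : {set colored_partition n} :=
  [set s : colored_partition n | [&& is_colored_partition s,
      ~~ contains_1111 s, ~~ contains_1122 s & ~~ contains_1221 s]].

(* Main.v *)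
Require Import Defs.
From mathcomp Require Import all_boot zify.
Set Implicit Arguments. Unset Strict Implicit.

Definition S n : {set {set 'I_n}} := [set [set i] | i : 'I_n].

Lemma partS n : partition (S n) [set: 'I_n].
Proof.
apply/and3P; split.
- apply/eqP/setP => x; rewrite in_setT; apply/bigcupP; exists [set x].
  + exact: imset_f. + exact: set11.
- apply/trivIsetP => A B /imsetP[i _ ->] /imsetP[j _ ->] neq.
  rewrite disjoints1 in_set1; apply: contra neq => /eqP->; done.
- apply/imsetP => [[i _ /setP /(_ i)]]; rewrite in_set0 in_set1 eqxx //.
Qed.

Lemma pblockS n (i : 'I_n) : pblock (S n) i = [set i].
Proof. apply: def_pblock; [by case/and3P: (partS n) | exact: imset_f | exact: set11]. Qed.

Lemma memS n (c : 'I_2) : ((S n, [ffun=> c]) : colored_partition n) \in avoiders n.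
Proof.
rewrite inE; apply/and4P; split.
- exact: partS.
- apply/existsP => [[i /existsP [j]]]; rewrite /same_block /= !pblockS.
  case/andP => /andP [lt /eqP /setP /(_ j)]; rewrite !in_set1 eqxx => /eqP E.
  by rewrite E ltnn in lt.
- apply/existsP => [[i /existsP [j]]]; rewrite /color_is /= !ffunE.
  by case/and4P => _ _ /eqP -> .
- apply/existsP => [[i /existsP [j]]]; rewrite /color_is /= !ffunE.
  by case/and4P => _ _ /eqP -> .
Qed.

Section Av.
Variables (n : nat) (s : colored_partition n).
Hypothesis Hs : s \in avoiders n.

Lemma av_part : partition s.1 [set: 'I_n].
Proof. by move: Hs; rewrite inE => /and4P []. Qed.

Lemma av_triv : trivIset s.1.
Proof. by case/and3P: av_part. Qed.

Lemma av_cover (x : 'I_n) : x \in cover s.1.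
Proof. by case/and3P: av_part => /eqP -> _ _; rewrite in_setT. Qed.

Lemma av_sym i j : same_block s i j = same_block s j i.
Proof. by rewrite /same_block eq_sym. Qed.

Lemma av_A i j : i != j -> same_block s i j -> s.2 i != s.2 j.
Proof.
move: Hs; rewrite inE => /and4P [_ H _ _].
wlog lt : i j / i < j.
  move=> W ne sb; case: (ltngtP i j) => l; first exact: W.
  - rewrite eq_sym; apply: W l _ _; [by rewrite eq_sym | by rewrite av_sym].
  - by case/negP: ne; apply/eqP/val_inj.
move=> _ sb; apply: contra H => E; apply/existsP; exists i; apply/existsP; exists j.
by rewrite lt sb E.
Qed.

Lemma ord2_cases (x : 'I_2) : x = ord0 \/ x = ord_max.
Proof. case: x => [[|[|m]] p]; [left|right|done]; exact: val_inj. Qed.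

Lemma av_B i j : i != j -> ~~ same_block s i j -> s.2 i = s.2 j.
Proof.
move: Hs; rewrite inE => /and4P [_ _ H1 H2].
wlog lt : i j / i < j.
  move=> W ne sb; case: (ltngtP i j) => l; first exact: W.
  - apply/esym; apply: W l _ _; [by rewrite eq_sym | by rewrite av_sym].
  - by case/negP: ne; apply/eqP/val_inj.
move=> _ sb.
case: (ord2_cases (s.2 i)) => Ei; case: (ord2_cases (s.2 j)) => Ej;
  rewrite ?Ei ?Ej //.
- case/negP: H1; apply/existsP; exists i; apply/existsP; exists j.
  by rewrite lt sb /color_is Ei Ej.
- case/negP: H2; apply/existsP; exists i; apply/existsP; exists j.
  by rewrite lt sb /color_is Ei Ej.
Qed.

Lemma av_S : (forall i j : 'I_n, i != j -> ~~ same_block s i j) -> s.1 = S n.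
Proof.
move=> D.
have pb i : pblock s.1 i = [set i].
  apply/eqP; rewrite eqEsubset sub1set mem_pblock av_cover andbT.
  apply/subsetP => j jB; rewrite in_set1; apply: contraT => neq.
  have neq' : i != j by rewrite eq_sym.
  case/negP: (D i j neq').
  by rewrite /same_block (same_pblock av_triv jB).
apply/setP => B; apply/idP/idP.
- move=> BP; case/and3P: av_part => _ _ n0.
  have: B != set0 by apply: contraNneq n0 => <-.
  case/set0Pn => x xB; rewrite -(def_pblock av_triv BP xB) pb; exact: imset_f.
- case/imsetP => i _ ->; rewrite -pb; exact: pblock_mem (av_cover i).
Qed.

Lemma av_col : (forall i j : 'I_n, i != j -> ~~ same_block s i j) ->
  forall x0 : 'I_n, s.2 = [ffun=> s.2 x0].
Proof.
move=> D x0; apply/ffunP => i; rewrite ffunE.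
case: (eqVneq i x0) => [->//|ne]; exact: av_B ne (D _ _ ne).
Qed.

Lemma av_D3 : n != 2 -> forall i j : 'I_n, i != j -> ~~ same_block s i j.
Proof.
move=> n2 i j ne; apply/negP => sb.
have: ~~ ([set: 'I_n] \subset [set i; j]).
  apply/negP => /subset_leq_card; rewrite cardsT card_ord cards2 ne => le.
  have n1 : n <= 1 by move: le n2; case: (n) => [|[|[|m]]].
  have ij : (i : nat) = j by have := ltn_ord i; have := ltn_ord j; lia.
  by case/negP: ne; apply/eqP/val_inj.
case/subsetPn => k _; rewrite !inE negb_or => /andP [ki kj].
have Aij := av_A ne sb.
case sik : (same_block s i k).
- have sjk : same_block s j k by move: sb sik; rewrite /same_block => /eqP <-.
  have ki' : i != k by rewrite eq_sym.
  have kj' : j != k by rewrite eq_sym.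
  have Aik := av_A ki' sik.
  have Ajk := av_A kj' sjk.
  move: Aij Aik Ajk.
  by case: (ord2_cases (s.2 i)) => ->; case: (ord2_cases (s.2 j)) => ->;
     case: (ord2_cases (s.2 k)) => ->.
- have sjk : ~~ same_block s j k.
    apply/negP => sjk; move: sik; rewrite /same_block (eqP sb); by move: sjk; rewrite /same_block => ->.
  have ki' : i != k by rewrite eq_sym.
  have kj' : j != k by rewrite eq_sym.
  have Bik := av_B ki' (negbT sik).
  have Bjk := av_B kj' sjk.
  by move: Aij; rewrite Bik Bjk eqxx.
Qed.

End Av.

Lemma pbT (i : 'I_2) : pblock [set [set: 'I_2]] i = setT.
Proof. apply: def_pblock; [exact: trivIset1 | exact: set11 | exact: in_setT]. Qed.

Lemma memT (f : {ffun 'I_2 -> 'I_2}) : injective f ->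
  (([set setT], f) : colored_partition 2) \in avoiders 2.
Proof.
move=> fi; rewrite inE; apply/and4P; split.
- apply/and3P; split.
  + by rewrite /cover big_set1.
  + exact: trivIset1.
  + by rewrite /= in_set1; apply/negP => /eqP /setP /(_ ord0); rewrite !inE.
- apply/negP => /existsP [i /existsP [j]]; rewrite /same_block /= !pbT eqxx andbT.
  case/andP => lt /eqP /fi E; by rewrite E ltnn in lt.
- apply/negP => /existsP [i /existsP [j]]; rewrite /same_block /= !pbT eqxx.
  by case/and4P.
- apply/negP => /existsP [i /existsP [j]]; rewrite /same_block /= !pbT eqxx.
  by case/and4P.
Qed.

Definition L2 : seq (colored_partition 2) :=
  [:: (S 2, [ffun=> ord0]); (S 2, [ffun=> ord_max]);
      ([set setT], [ffun i => i]); ([set setT], [ffun i => rev_ord i])].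

Lemma ST : S 2 != [set setT].
Proof.
apply/negP => /eqP /setP /(_ [set ord0]); rewrite imset_f // in_set1 => /esym /eqP /setP /(_ ord_max).
by rewrite !inE.
Qed.

Lemma uniqL2 : uniq L2.
Proof.
rewrite /= !inE !xpair_eqE (negbTE ST) eqxx /= !andbT eqxx orbF /=.
by apply/andP; split; apply/negP => /eqP /ffunP /(_ ord0); rewrite !ffunE => /(congr1 val).
Qed.

Lemma ord2_neq (i j : 'I_2) : i != j -> (i = ord0 /\ j = ord_max) \/ (i = ord_max /\ j = ord0).
Proof.
by case: (ord2_cases i) => ->; case: (ord2_cases j) => ->; rewrite ?eqxx //; [left|right].
Qed.

Lemma av2 (s : colored_partition 2) : s \in avoiders 2 -> s \in L2.
Proof.
move=> Hs; case sb: (same_block s ord0 ord_max).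
- have pb0 : pblock s.1 ord0 = setT.
    apply/setP => y; rewrite in_setT; case: (ord2_cases y) => ->.
    + by rewrite mem_pblock av_cover.
    + by rewrite -(eq_pblock _ (av_triv Hs) (av_cover Hs _)).
  have E1 : s.1 = [set setT].
    apply/setP => B; rewrite in_set1; apply/idP/eqP.
    * move=> BP; case/and3P: (av_part Hs) => _ _ n0.
      have: B != set0 by apply: contraNneq n0 => <-.
      case/set0Pn => x xB; rewrite -(def_pblock (av_triv Hs) BP xB) -pb0.
      by apply: same_pblock (av_triv Hs) _; rewrite pb0 in_setT.
    * by move=> ->; rewrite -pb0; apply: pblock_mem (av_cover Hs _).
  have A := av_A Hs (isT : ord0 != ord_max :> 'I_2) sb.
  clear pb0; case: s Hs sb E1 A => P f /= _ _ -> A.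
  rewrite !inE; apply/orP; right; apply/orP; right.
  case: (ord2_neq A) => [[E0 E1]|[E0 E1]]; [apply/orP; left|apply/orP; right];
    apply/eqP; congr pair; apply/ffunP => i; rewrite ffunE;
    (case: (ord2_cases i) => ->; [rewrite E0| rewrite E1]); try apply: val_inj => //.
- have D : forall i j : 'I_2, i != j -> ~~ same_block s i j.
    move=> i j /ord2_neq [[-> ->]|[-> ->]]; first by rewrite sb.
    by rewrite av_sym sb.
  have E1 := av_S Hs D; have E2 := av_col Hs D ord0.
  move: E1 E2; case: s {Hs sb D} => P f /= -> E2.
  rewrite E2 !inE; case: (ord2_cases (f ord0)) => ->; by rewrite eqxx ?orbT.
Qed.

Lemma avn n : 1 <= n -> n != 2 -> avoiders n = [set (S n, [ffun=> c]) | c : 'I_2].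
Proof.
move=> n1 n2; apply/setP => s; apply/idP/idP.
- move=> Hs; have D := av_D3 Hs n2.
  pose x0 : 'I_n := Ordinal n1.
  have E1 := av_S Hs D; have E2 := av_col Hs D x0.
  apply/imsetP; exists (s.2 x0) => //.
  move: E1 E2; case: s {Hs D} => P f /= -> E2.
  by rewrite {1}E2.
- by case/imsetP => c _ ->; exact: memS.
Qed.

Theorem mainTheorem11 (n : nat) : 1 <= n ->
  #|avoiders n| = (if n == 2 then 4 else 2).
Proof.
move=> n1; case: eqP => [->|/eqP n2].
- have -> : #|avoiders 2| = #|[pred x in L2]|.
    apply: eq_card => s; apply/idP/idP; first exact: av2.
    rewrite inE /= => sL; rewrite /L2 !inE in sL.
    case/or4P: sL => /eqP ->; try exact: memS.
      by apply: memT => i j; rewrite !ffunE.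
    by apply: memT => i j; rewrite !ffunE => /rev_ord_inj.
  by rewrite (card_uniqP uniqL2).
- rewrite avn // card_imset ?card_ord // => c d [/ffunP /(_ (Ordinal n1))].
  by rewrite !ffunE.
Qed.
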